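(* Let $c=\frac32\left((1+\sqrt2)^{1/3}-(1+\sqrt2)^{-1/3}\right)=0.8941\cdots$ and let $x$ be a real number with $-3<x<c$. (i) We have $$\sum_{k=1}^\infty\frac{((2x-3)^2k+2x^2+2x-3)x^{3k}}{(x-1)^k\binom{3k}k}=-2x^3\frac{x+7}{(x+3)^2}+\frac{8x^2(x-1)q(x)}{(x+3)^2\sqrt{(1-x)(3+x)}},$$ where $$q(x)=\begin{cases}\arctan\left(\frac x{x+2}\sqrt{\frac{3+x}{1-x}}\right)&\text{if}\ -2<x<1,\\ -\frac{\pi}2&\text{if}\ x=-2,\\ \arctan\left(\frac x{x+2}\sqrt{\frac{3+x}{1-x}}\right)-\pi&\text{if}\ -3<x<-2.\end{cases}$$ (ii) We have $$\sum_{k=0}^\infty\frac{(s(x)k+t(x))x^{3k}}{(x-1)^k\binom{3k}k}=12x^2(1-x)\log(1-x)-27(1-x)(x^2-6x+3),$$ where $$s(x)=(x+3)(2x-3)^2(x^2-12x+9)=4x^5-48x^4+9x^3+351x^2-567x+243$$ and $$t(x)=2x^5-48x^4+69x^3-189x^2+243x-81.$$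
   Context: $\arctan$ denotes the principal branch with values in $(-\pi/2,\pi/2)$; $\log$ is the natural logarithm. *)

(* Defs.v *)
From Stdlib Require Import Reals.
From Stdlib Require Binomial.
From Coquelicot Require Import Coquelicot.
Open Scope R_scope.

Definition binom (n k : nat) : R := Binomial.C n k.

Definition c_const : R :=
  3 / 2 * (Rpower (1 + sqrt 2) (1 / 3) - Rpower (1 + sqrt 2) (- (1 / 3))).

Definition q_fun (x : R) : R :=
  if Rlt_dec (-2) x then atan (x / (x + 2) * sqrt ((3 + x) / (1 - x)))
  else if Req_EM_T x (-2) then - (PI / 2)
  else atan (x / (x + 2) * sqrt ((3 + x) / (1 - x))) - PI.

Definition s_fun (x : R) : R := (x + 3) * (2 * x - 3) ^ 2 * (x ^ 2 - 12 * x + 9).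
Definition t_fun (x : R) : R :=
  2 * x ^ 5 - 48 * x ^ 4 + 69 * x ^ 3 - 189 * x ^ 2 + 243 * x - 81.

(* Main.v *)
Require Import Defs.
From Stdlib Require Import Reals Lra Lia Psatz Arith Factorial.
From Coquelicot Require Import Coquelicot.
Open Scope R_scope.

Lemma c_eq : 4 * c_const ^ 3 = 27 * (1 - c_const).
Proof.
  unfold c_const.
  set (b := 1 + sqrt 2).
  assert (Hs2 : sqrt 2 * sqrt 2 = 2) by (apply sqrt_sqrt; lra).
  assert (Hs0 : 0 < sqrt 2) by (apply sqrt_lt_R0; lra).
  assert (Hb : 0 < b) by (unfold b; lra).
  set (a := Rpower b (1/3)).
  assert (Ha : 0 < a) by (unfold a, Rpower; apply exp_pos).
  assert (Ha3 : a ^ 3 = b).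
  { unfold a. rewrite <- Rpower_pow by (unfold Rpower; apply exp_pos).
    rewrite Rpower_mult. replace (1/3 * INR 3) with 1 by (simpl; field).
    apply Rpower_1; auto. }
  rewrite Rpower_Ropp. fold a.
  assert (Hb' : / b = sqrt 2 - 1).
  { unfold b. field_simplify_eq. nra. nra. }
  assert (Hinv : (/ a) ^ 3 = sqrt 2 - 1) by (rewrite pow_inv, Ha3; auto).
  replace (4 * (3 / 2 * (a - / a)) ^ 3) with
    (27/2 * (a^3 - (/a)^3) - 81/2 * (a - /a)) by (field; lra).
  rewrite Ha3, Hinv. unfold b. field. lra.
Qed.

Lemma rho_lt (x : R) : -3 < x -> x < c_const -> 4 * Rabs x ^ 3 < 27 * (1 - x).
Proof.
  intros h1 h2. pose proof c_eq as E.
  destruct (Rle_lt_dec 0 x).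
  - rewrite Rabs_right by lra.
    assert (0 < c_const) by lra.
    assert (x ^ 3 < c_const ^ 3).
    { assert (0 < c_const*c_const + c_const * x + x*x) by nra.
      replace (c_const ^ 3 - x ^ 3) with ((c_const - x) * (c_const*c_const + c_const * x + x*x)) by ring.
      apply Rminus_gt_0_lt. replace (c_const ^ 3 - x ^ 3) with ((c_const - x) * (c_const*c_const + c_const * x + x*x)) by ring.
      apply Rmult_lt_0_compat; lra. }
    lra.
  - rewrite Rabs_left by lra. nra.
Qed.


Lemma binom_pos n k : 0 < binom n k.
Proof.
  unfold binom, Binomial.C. apply Rdiv_lt_0_compat.
  - apply lt_0_INR, lt_O_fact.
  - apply Rmult_lt_0_compat; apply lt_0_INR, lt_O_fact.
Qed.

Lemma fact3 n : INR (fact (S (S (S n)))) = INR (S (S (S n))) * INR (S (S n)) * INR (S n) * INR (fact n).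
Proof. rewrite !fact_simpl, !mult_INR. ring. Qed.
Lemma fact2 n : INR (fact (S (S n))) = INR (S (S n)) * INR (S n) * INR (fact n).
Proof. rewrite !fact_simpl, !mult_INR. ring. Qed.

Lemma binom_rec j : binom (3*j+6) (j+2) * (2*(INR j+2)*(2*INR j+3))
   = binom (3*j+3) (j+1) * (3*(3*INR j+4)*(3*INR j+5)).
Proof.
  unfold binom, Binomial.C.
  replace (3*j+6 - (j+2))%nat with (S (S (2*j+2)))%nat by lia.
  replace (3*j+3 - (j+1))%nat with (2*j+2)%nat by lia.
  replace (3*j+6)%nat with (S (S (S (3*j+3))))%nat by lia.
  replace (j+2)%nat with (S (j+1))%nat by lia.
  rewrite fact3, fact2. rewrite (fact_simpl (j+1)).
  pose proof (lt_0_INR _ (lt_O_fact (3*j+3))).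
  pose proof (lt_0_INR _ (lt_O_fact (2*j+2))).
  pose proof (lt_0_INR _ (lt_O_fact (j+1))).
  rewrite (mult_INR (S (j+1))).
  set (A := INR (fact (3*j+3))) in *. set (B := INR (fact (2*j+2))) in *.
  set (C := INR (fact (j+1))) in *.
  repeat rewrite ?S_INR, ?plus_INR, ?mult_INR. rewrite ?INR_0.
  field. pose proof (pos_INR j). repeat split; lra.
Qed.

Lemma binom00 : binom 0 0 = 1.
Proof. unfold binom, Binomial.C. simpl. field. Qed.


Definition rr (x : R) := sqrt ((1 - x) * (3 + x)).

Lemma rr_pos x : -3 < x < 1 -> 0 < rr x.
Proof. intros. unfold rr. apply sqrt_lt_R0. nra. Qed.
Lemma rr_sq x : -3 < x < 1 -> rr x * rr x = (1 - x) * (3 + x).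
Proof. intros. unfold rr. apply sqrt_sqrt. nra. Qed.

Lemma s_eq x : -3 < x < 1 -> sqrt ((3 + x) / (1 - x)) = rr x / (1 - x).
Proof.
  intros H. pose proof (rr_pos x H). pose proof (rr_sq x H).
  rewrite <- (sqrt_pow2 (rr x / (1 - x))).
  - f_equal. replace ((rr x / (1 - x)) ^ 2) with (rr x * rr x / ((1-x)*(1-x))) by (field; lra). rewrite H1. field. lra.
  - apply Rlt_le, Rdiv_lt_0_compat; lra.
Qed.

Lemma triple x : -3 < x < 1 ->
  let th := atan (rr x / (1 - x)) in
  sin (3 * th) = - x * (rr x / (1 - x)) * cos th /\ cos (3 * th) = - (x + 2) * cos th
  /\ 0 < cos th.
Proof.
  intros H th. set (s := rr x / (1 - x)).
  pose proof (rr_pos x H). pose proof (rr_sq x H).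
  assert (Hc : 0 < cos th). { pose proof (atan_bound s). apply cos_gt_0; unfold th; fold s; lra. }
  assert (Ht : sin th = s * cos th).
  { pose proof (tan_atan s) as T. change (atan s) with th in T. unfold tan in T.
    rewrite <- T. field; lra. }
  assert (Hsc : sin th ^ 2 + cos th ^ 2 = 1).
  { pose proof (sin2_cos2 th). unfold Rsqr in H2. lra. }
  assert (HC2 : 4 * cos th ^ 2 = 1 - x).
  { rewrite Ht in Hsc. unfold s in Hsc.
    assert (E : (rr x / (1 - x) * cos th) ^ 2 = (3 + x) / (1 - x) * cos th ^ 2).
    { replace ((rr x / (1 - x) * cos th) ^ 2) with ((rr x * rr x) / ((1-x)*(1-x)) * cos th ^ 2) by (field; lra).
      rewrite H1. field. lra. }
    rewrite E in Hsc.
    assert (E2: 4 * cos th ^ 2 = ((3 + x) / (1 - x) * cos th ^ 2 + cos th ^ 2) * (1 - x)) by (field; lra).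
    rewrite E2, Hsc. ring. }
  replace (3 * th) with (2 * th + th) by ring.
  rewrite sin_plus, cos_plus, sin_2a, cos_2a. rewrite Ht.
  assert (Hs2 : s * s * cos th ^2 = (3 + x) / 4).
  { unfold s. replace (rr x / (1 - x) * (rr x / (1 - x))) with (rr x * rr x / ((1-x)*(1-x))) by (field; lra).
    rewrite H1. replace (cos th ^ 2) with ((1-x)/4) by lra. field. lra. }
  split; [|split]; [| |lra].
  - transitivity (s * cos th * (3 * cos th ^ 2 - s * s * cos th ^ 2)). ring.
    rewrite Hs2. replace (cos th ^ 2) with ((1-x)/4) by lra. fold s. field.
  - transitivity (cos th * (cos th ^ 2 - 3 * (s * s * cos th ^ 2))). ring.
    rewrite Hs2. replace (cos th ^ 2) with ((1-x)/4) by lra. field.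
Qed.

Lemma tan_le a b : -(PI/2) < a -> b < PI/2 -> a <= b -> tan a <= tan b.
Proof.
  intros. destruct (Req_dec a b). subst; lra.
  apply Rlt_le, tan_increasing; lra.
Qed.

Lemma sqrt3_facts : 0 < sqrt 3 /\ sqrt 3 * sqrt 3 = 3.
Proof. split. apply sqrt_lt_R0; lra. apply sqrt_sqrt; lra. Qed.

Lemma q_eq x : -3 < x < 1 -> q_fun x = 3 * atan (rr x / (1 - x)) - PI.
Proof.
  intros H. unfold q_fun. rewrite (s_eq x H).
  pose proof (triple x H) as [Hs [Hc HC]].
  set (s := rr x / (1 - x)) in *. set (th := atan s) in *.
  pose proof (rr_pos x H). pose proof (rr_sq x H).
  assert (Hs0 : 0 < s) by (apply Rdiv_lt_0_compat; lra).
  assert (Hss : s * s * 3 - 1 = 4 * (x + 2) / (1 - x)).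
  { unfold s. replace (rr x / (1 - x) * (rr x / (1 - x))) with (rr x * rr x / ((1-x)*(1-x))) by (field; lra).
    rewrite H1. field. lra. }
  assert (Hb : - (PI/2) < th < PI/2) by (pose proof (atan_bound s); unfold th; lra).
  assert (Ht : tan th = s) by apply tan_atan.
  pose proof sqrt3_facts as [S1 S2].
  assert (T6 : tan (PI/6) = 1 / sqrt 3) by apply tan_PI6.
  pose proof PI_RGT_0.
  assert (Ht3 : x <> -2 -> tan (3 * th) = x / (x + 2) * s).
  { intros. unfold tan. rewrite Hs, Hc. field. split; lra. }
  destruct (Rlt_dec (-2) x) as [h|h].
  - assert (G : PI/6 < th).
    { destruct (Rlt_dec (PI/6) th); auto.
      assert (tan th <= tan (PI/6)) by (apply tan_le; lra).
      rewrite Ht, T6 in H3.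
      assert (s * sqrt 3 <= 1).
      { apply (Rmult_le_compat_r (sqrt 3)) in H3; [|lra].
        replace (1 / sqrt 3 * sqrt 3) with 1 in H3 by (field; lra). lra. }
      assert (4 * (x + 2) / (1 - x) > 0) by (apply Rdiv_lt_0_compat; lra).
      nra. }
    rewrite <- Ht3 by lra.
    replace (tan (3 * th)) with (tan (3 * th - PI)).
    + rewrite atan_tan; [ring | lra].
    + unfold tan. rewrite sin_minus, cos_minus, sin_PI, cos_PI. field.
      rewrite Hc. apply Rmult_integral_contrapositive; split; lra.
  - destruct (Req_EM_T x (-2)) as [e|e].
    + assert (s = 1 / sqrt 3).
      { apply Rsqr_inj. lra. apply Rlt_le, Rdiv_lt_0_compat; lra.
        unfold Rsqr. replace (1 / sqrt 3 * (1 / sqrt 3)) with (1/(sqrt 3 * sqrt 3)) by (field; lra). rewrite S2.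
        rewrite e in Hss. replace (4 * (-2 + 2) / (1 - -2)) with 0 in Hss by field. lra. }
      unfold th. rewrite H3, <- T6, atan_tan by lra. field.
    + assert (G : 0 < th /\ th < PI/6).
      { split.
        - destruct (Rlt_dec 0 th); auto.
          assert (tan th <= tan 0) by (apply tan_le; lra). rewrite tan_0 in H3. lra.
        - destruct (Rlt_dec th (PI/6)); auto.
          assert (tan (PI/6) <= tan th) by (apply tan_le; lra).
          rewrite Ht, T6 in H3.
          assert (1 <= s * sqrt 3).
          { apply (Rmult_le_compat_r (sqrt 3)) in H3; [|lra].
            replace (1 / sqrt 3 * sqrt 3) with 1 in H3 by (field; lra). lra. }
          assert (4 * (x + 2) / (1 - x) < 0).
          { unfold Rdiv. apply Rmult_neg_pos. lra. apply Rinv_0_lt_compat. lra. }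
          nra. }
      rewrite <- Ht3 by lra. rewrite atan_tan by lra. ring.
Qed.


Lemma is_derive_eq (f : R -> R) (x l l' : R) : is_derive f x l -> @eq R l l' -> is_derive f x l'.
Proof. intros; subst; auto. Qed.

Lemma D_rr x : -3 < x < 1 -> is_derive rr x (rr x * (-(1+x)/((1-x)*(3+x)))).
Proof.
  intros H. pose proof (rr_pos x H). pose proof (rr_sq x H).
  assert (Hp : is_derive (fun y => (1-y)*(3+y)) x (-2-2*x)).
  { auto_derive; auto. ring. }
  unfold rr at 1. eapply is_derive_eq.
  - apply (is_derive_sqrt _ _ _ Hp). nra.
  - fold (rr x). rewrite <- H1. field. lra.
Qed.

Definition Qf (x : R) := 3 * atan (rr x / (1 - x)) - PI.

Lemma D_Q x : -3 < x < 1 -> is_derive Qf x (3 * rr x / (2 * ((1-x)*(3+x)))).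
Proof.
  intros H. pose proof (rr_pos x H). pose proof (rr_sq x H).
  unfold Qf. auto_derive.
  - split; auto. exists (rr x * (-(1+x)/((1-x)*(3+x)))). apply D_rr; auto.
    split; auto. lra.
    replace (Derive (fun x0 : R => rr x0) x) with (rr x * (-(1+x)/((1-x)*(3+x)))).
    2:{ symmetry. apply is_derive_unique. apply D_rr; auto. }
    replace (1 + rr x * / (1 + - x) * (rr x * / (1 + - x) * 1)) with (4 / (1 - x)).
    2:{ transitivity (1 + rr x * rr x / ((1-x)*(1-x))). rewrite H1. field. lra. field. lra. }
    field. lra.
Qed.

Definition bn (j : nat) := binom (3*j+3) (j+1).
Definition pw (n : nat) (x : R) := x ^ n.

Lemma bn_pos j : 0 < bn j.
Proof. apply binom_pos. Qed.

Lemma bn_S j : bn (S j) = bn j * (3*(3*INR j+4)*(3*INR j+5)) / (2*(INR j+2)*(2*INR j+3)).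
Proof.
  unfold bn. replace (3 * S j + 3)%nat with (3*j+6)%nat by lia.
  replace (S j + 1)%nat with (j+2)%nat by lia.
  pose proof (binom_rec j). pose proof (pos_INR j).
  apply (Rmult_eq_reg_r (2*(INR j+2)*(2*INR j+3))). 2: nra.
  rewrite H. field. nra.
Qed.

Lemma bn0 : bn 0 = 3.
Proof. unfold bn, binom, Binomial.C. simpl. field. Qed.

Lemma pow_S3 x j : x ^ (3 * S j) = x ^ (3 * j) * x ^ 3.
Proof. replace (3 * S j)%nat with (3*j+3)%nat by lia. apply pow_add. Qed.

Lemma D_pw n x : is_derive (pw (S n)) x (INR (S n) * pw n x).
Proof.
  unfold pw. eapply is_derive_eq. apply is_derive_pow. apply is_derive_id.
  simpl pred. unfold one; simpl. ring.
Qed.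

Lemma D_pw1 n x : is_derive (fun y => pw (S n) (y - 1)) x (INR (S n) * pw n (x - 1)).
Proof.
  assert (Hi : is_derive (fun y => y - 1) x 1) by (auto_derive; auto).
  unfold pw. eapply is_derive_eq. apply (is_derive_pow _ _ _ _ Hi).
  simpl pred. ring.
Qed.

Definition Yf (j : nat) (x : R) :=
  3*(x+3)*(2*x-3)*(3*INR j+2)*(3*INR j+1) * x^(3*j) / (8*(x-1)^(S (S j)) * bn j).

Definition F0 (x : R) := - x * (x + 7) * rr x / (4 * (x - 1)) + Qf x.

Lemma D_F0 x : -3 < x < 1 -> is_derive F0 x (- rr x * Yf 0 x).
Proof.
  intros H. pose proof (rr_pos x H). pose proof (rr_sq x H).
  unfold F0. auto_derive.
  - repeat split; try lra.
    exists (rr x * (-(1+x)/((1-x)*(3+x)))). apply D_rr; auto.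
    exists (3 * rr x / (2 * ((1-x)*(3+x)))). apply D_Q; auto.
  - replace (Derive (fun x0 : R => rr x0) x) with (rr x * (-(1+x)/((1-x)*(3+x)))).
    2:{ symmetry. apply is_derive_unique. apply D_rr; auto. }
    replace (Derive (fun x0 : R => Qf x0) x) with (3 * rr x / (2 * ((1-x)*(3+x)))).
    2:{ symmetry. apply is_derive_unique. apply D_Q; auto. }
    unfold Yf. rewrite bn0. simpl. field. repeat split; lra.
Qed.

Lemma pw_def n x : pw n x = x ^ n.
Proof. reflexivity. Qed.
Opaque pw.
Definition Kp (j : nat) (x : R) := ((2*x-3)^2 * (INR j + 1) + (2*x^2+2*x-3)) * (x+3)^2.
Definition gf (j : nat) (x : R) :=
  rr x * (Kp j x * pw (S (3*j)) x / (8 * pw (S (S j)) (x-1) * bn j)).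

Lemma D_g j x : -3 < x < 1 -> is_derive (gf j) x (rr x * (Yf (S j) x - Yf j x)).
Proof.
  intros H. pose proof (rr_pos x H). pose proof (rr_sq x H). pose proof (bn_pos j).
  assert (Hx1 : pw (S (S j)) (x - 1) <> 0). { rewrite pw_def. apply pow_nonzero. lra. }
  unfold gf, Kp. auto_derive.
  - repeat split; auto.
    exists (rr x * (-(1+x)/((1-x)*(3+x)))). apply D_rr; auto.
    eexists. apply D_pw.
    eexists. apply D_pw.
    replace (x + - (1)) with (x - 1) by ring. apply Rmult_integral_contrapositive; split; lra.
  - replace (Derive (fun x0 : R => rr x0) x) with (rr x * (-(1+x)/((1-x)*(3+x)))).
    2:{ symmetry. apply is_derive_unique. apply D_rr; auto. }
    rewrite (is_derive_unique _ _ _ (D_pw _ _)).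
    rewrite (is_derive_unique _ _ _ (D_pw _ _)).
    rewrite !pw_def. unfold Yf. rewrite bn_S, pow_S3.
    replace (j + (j + (j + 0)))%nat with (3*j)%nat by lia.
    rewrite !S_INR, mult_INR.
    replace (x + - (1)) with (x - 1) by ring.
    set (P := x ^ (3 * j)). simpl pow. set (D := (x - 1) ^ j). set (J := INR j).
    replace (x ^ (j + (j + (j + 0)))) with P by reflexivity.
    replace (INR 3) with 3 by (simpl; ring).
    assert (D <> 0) by (apply pow_nonzero; lra).
    assert (0 <= J) by apply pos_INR.
    field. repeat split; try lra.
Qed.

Definition g2 (j : nat) (x : R) :=
  (s_fun x * (INR j + 1) + t_fun x) * pw (S (3*j)) x / (12 * (1 - x) * pw (S j) (x - 1) * bn j).
Definition Y2 (j : nat) (x : R) :=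
  3*(2*x-3)*(x^2-12*x+9)*(3*INR j+2)*(3*INR j+1) * x^(3*j) / (12*(1-x)*(x-1)^(S j) * bn j).
Definition F2 (x : R) := ln (1 - x) - x * (x^2 - 24*x + 21) / (6 * (1 - x)).

Lemma D_F2 x : x < 1 -> is_derive F2 x (- Y2 0 x).
Proof.
  intros H. unfold F2. auto_derive.
  - repeat split; lra.
  - unfold Y2. rewrite bn0. simpl. field. lra.
Qed.

Lemma D_g2 j x : x < 1 -> is_derive (g2 j) x (Y2 (S j) x - Y2 j x).
Proof.
  intros H. pose proof (bn_pos j).
  assert (Hx1 : pw (S j) (x - 1) <> 0). { rewrite pw_def. apply pow_nonzero. lra. }
  unfold g2, s_fun, t_fun. auto_derive.
  - repeat split; auto.
    eexists. apply D_pw.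
    eexists. apply D_pw.
    replace (x + - (1)) with (x - 1) by ring.
    assert (12 * (1 - x) <> 0) by (apply Rmult_integral_contrapositive_currified; lra).
    apply Rmult_integral_contrapositive_currified; [apply Rmult_integral_contrapositive_currified; auto | lra].
  - replace (Derive (fun x0 => pw (S (j + (j + (j + 0)))) x0) x) with (INR (S (3*j)) * pw (3*j) x).
    2:{ symmetry. apply is_derive_unique. apply D_pw. }
    replace (Derive (fun x0 => pw (S j) x0) (x + - (1))) with (INR (S j) * pw j (x + - (1))).
    2:{ symmetry. apply is_derive_unique. apply D_pw. }
    rewrite !pw_def. unfold Y2. rewrite bn_S, pow_S3.
    replace (j + (j + (j + 0)))%nat with (3*j)%nat by lia.
    rewrite !S_INR, mult_INR.
    replace (x + - (1)) with (x - 1) by ring.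
    set (P := x ^ (3 * j)). simpl pow. set (D := (x - 1) ^ j). set (J := INR j).
    replace (x ^ (j + (j + (j + 0)))) with P by reflexivity.
    replace (INR 3) with 3 by (simpl; ring).
    assert (D <> 0) by (apply pow_nonzero; lra).
    assert (0 <= J) by apply pos_INR.
    field. repeat split; try lra.
Qed.


Lemma lim_inv1 : is_lim_seq (fun n => / (INR n + 1)) 0.
Proof.
  assert (H : is_lim_seq (fun n => INR n + 1) p_infty).
  { eapply is_lim_seq_ext. intros n. apply S_INR.
    apply (proj1 (is_lim_seq_incr_1 INR p_infty)). apply is_lim_seq_INR. }
  apply (is_lim_seq_inv _ _ H). discriminate.
Qed.

Lemma lim_invd d : 0 < d -> is_lim_seq (fun n => / (INR n + d)) 0.
Proof.
  intros Hd.
  apply is_lim_seq_le_le with (u := fun _ => 0) (w := fun n => (1 + /d) * / (INR n + 1)).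
  - intros n. pose proof (pos_INR n). split.
    + apply Rlt_le, Rinv_0_lt_compat. lra.
    + assert (He : 0 < /d) by (apply Rinv_0_lt_compat; lra).
      assert (Hde : d * / d = 1) by (field; lra).
      replace ((1 + /d) * /(INR n+1)) with (/ ((INR n + 1) / (1 + /d))) by (field; lra).
      apply Rinv_le_contravar. apply Rdiv_lt_0_compat; lra.
      apply (Rmult_le_reg_r (1 + /d)). lra.
      replace ((INR n + 1) / (1 + / d) * (1 + / d)) with (INR n + 1) by (field; lra).
      nra.
  - apply is_lim_seq_const.
  - replace (Finite 0) with (Finite ((1 + /d) * 0)) by (f_equal; ring).
    apply is_lim_seq_mult'. apply is_lim_seq_const. apply lim_inv1.
Qed.

Lemma lim_aff (a e d : R) : 0 < d -> is_lim_seq (fun n => a + e * / (INR n + d)) a.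
Proof.
  intros Hd. replace (Finite a) with (Finite (a + e * 0)) by (f_equal; ring).
  apply is_lim_seq_plus'. apply is_lim_seq_const.
  apply is_lim_seq_mult'. apply is_lim_seq_const. apply lim_invd; auto.
Qed.

Lemma decay rho : 0 <= rho < 27/4 -> is_lim_seq (fun N => (INR N + 1)^2 * rho^N / bn N) 0.
Proof.
  intros Hr.
  set (r1 := (rho + 27/4)/2).
  assert (Hr1 : 0 < r1 < 27/4) by (unfold r1; lra).
  set (b := fun N => (INR N + 1)^2 * r1^N / bn N).
  assert (Hb : forall N, 0 < b N).
  { intros N. unfold b. pose proof (bn_pos N). pose proof (pos_INR N).
    apply Rdiv_lt_0_compat; auto. apply Rmult_lt_0_compat. nra. apply pow_lt; lra. }
  assert (Hs : ex_series (fun n => Rabs (b n))).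
  { apply ex_series_DAlembert with (k := 4 * r1 / 27). lra.
    intros n; pose proof (Hb n); lra.
    apply is_lim_seq_ext with
      (u := fun n => (1 + 1 * / (INR n + 1)) * ((1 + 1 * / (INR n + 1)) * 1) * r1 * (2/3)
              * (1/3 + (2/9) * / (INR n + 4/3)) * (2/3 + (-1/9) * / (INR n + 5/3))).
    - intros n. pose proof (Hb n). pose proof (Hb (S n)).
      rewrite Rabs_right by (apply Rle_ge, Rlt_le, Rdiv_lt_0_compat; auto).
      unfold b. rewrite bn_S, S_INR. pose proof (pos_INR n). pose proof (bn_pos n).
      simpl pow. field. repeat split; try lra.
      apply pow_nonzero; lra.
    - replace (4 * r1 / 27) with (1 * (1 * 1) * r1 * (2/3) * (1/3) * (2/3)) by field.
      repeat apply is_lim_seq_mult'; try apply is_lim_seq_const; apply lim_aff; lra. }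
  pose proof (ex_series_lim_0 _ Hs) as L.
  apply is_lim_seq_le_le with (u := fun _ => 0) (w := fun n => Rabs (b n)); auto.
  - intros n. pose proof (bn_pos n). pose proof (pos_INR n). split.
    + apply Rmult_le_pos. apply Rmult_le_pos. nra. apply pow_le; lra.
      apply Rlt_le, Rinv_0_lt_compat; auto.
    + rewrite Rabs_right by (apply Rle_ge, Rlt_le, Hb). unfold b.
      apply Rmult_le_compat_r. apply Rlt_le, Rinv_0_lt_compat; auto.
      apply Rmult_le_compat_l. nra. apply pow_incr. unfold r1; lra.
  - apply is_lim_seq_const.
Qed.

Lemma mvt_bound (f df : R -> R) (x0 K : R) :
  (forall y, Rmin 0 x0 <= y <= Rmax 0 x0 -> is_derive f y (df y)) ->
  (forall y, Rmin 0 x0 <= y <= Rmax 0 x0 -> Rabs (df y) <= K) ->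
  Rabs (f x0 - f 0) <= K * Rabs x0.
Proof.
  intros Hd Hb.
  destruct (MVT_gen f 0 x0 df) as [c [Hc E]].
  - intros y Hy. apply Hd. lra.
  - intros y Hy. apply continuity_pt_filterlim. apply (@ex_derive_continuous R_AbsRing R_NormedModule).
    eexists. apply Hd. auto.
  - rewrite E. rewrite Rabs_mult. replace (x0 - 0) with x0 by ring.
    apply Rmult_le_compat_r. apply Rabs_pos. apply Hb. auto.
Qed.

Lemma pow_mult_R (y : R) (a b : nat) : y ^ (a * b) = (y ^ a) ^ b.
Proof. induction b. rewrite Nat.mul_0_r. reflexivity.
  replace (a * S b)%nat with (a + a * b)%nat by lia. rewrite pow_add, IHb. simpl. ring. Qed.

Lemma pow_div_R (a b : R) (n : nat) : b <> 0 -> a ^ n / b ^ n = (a / b) ^ n.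
Proof. intros. induction n. simpl. field. simpl. rewrite <- IHn. field. split; auto. apply pow_nonzero; auto. Qed.

Lemma zbound (x0 y : R) (N : nat) : -3 < x0 < 1 -> Rmin 0 x0 <= y <= Rmax 0 x0 ->
  Rabs (y ^ (3 * N) / (y - 1) ^ N) <= (Rabs x0 ^ 3 / (1 - x0)) ^ N.
Proof.
  intros Hx Hy.
  assert (Hy1 : y < 1). { unfold Rmax in Hy. destruct (Rle_dec 0 x0); lra. }
  rewrite pow_mult_R, pow_div_R by lra. rewrite <- RPow_abs.
  apply pow_incr. split. apply Rabs_pos.
  rewrite Rabs_div by lra. rewrite <- RPow_abs. rewrite (Rabs_left (y - 1)) by lra.
  replace (- (y - 1)) with (1 - y) by ring.
  apply (Rmult_le_reg_r ((1 - y) * (1 - x0))). nra.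
  replace (Rabs y ^ 3 / (1 - y) * ((1 - y) * (1 - x0))) with (Rabs y ^ 3 * (1 - x0)) by (field; lra).
  replace (Rabs x0 ^ 3 / (1 - x0) * ((1 - y) * (1 - x0))) with (Rabs x0 ^ 3 * (1 - y)) by (field; lra).
  unfold Rmin, Rmax in Hy. destruct (Rle_dec 0 x0).
  - rewrite !Rabs_right by lra.
    assert (y ^ 3 <= x0 ^ 3) by (apply pow_incr; lra).
    assert (0 <= y ^ 3) by (apply pow_le; lra). nra.
  - rewrite !Rabs_left1 by lra.
    set (m := - y). set (M := - x0).
    assert (0 <= m <= M) by (unfold m, M; lra).
    replace (1 - x0) with (1 + M) by (unfold M; ring).
    replace (1 - y) with (1 + m) by (unfold m; ring).
    assert (m ^ 3 <= M ^ 3) by (apply pow_incr; lra).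
    assert (m * m <= M * M) by nra.
    assert (0 <= m ^ 3) by (apply pow_le; lra).
    assert (m ^ 3 * M <= M ^ 3 * m).
    { replace (m ^ 3 * M) with ((m * m) * (m * M)) by ring.
      replace (M ^ 3 * m) with ((M * M) * (m * M)) by ring.
      apply Rmult_le_compat_r. nra. auto. }
    nra.
Qed.


Fixpoint sumg (f : nat -> R -> R) (N : nat) (x : R) : R :=
  match N with O => 0 | S n => sumg f n x + f n x end.

Lemma D_sum (f : nat -> R -> R) (Z : nat -> R -> R) x :
  (forall j, is_derive (f j) x (Z (S j) x - Z j x)) ->
  forall N, is_derive (sumg f N) x (Z N x - Z O x).
Proof.
  intros H N. induction N.
  - simpl. eapply is_derive_eq. apply is_derive_const. change (@eq R 0 (Z O x - Z O x)). ring.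
  - simpl. eapply is_derive_eq. apply (is_derive_plus _ _ _ _ _ IHN (H N)).
    change (@eq R ((Z N x - Z O x) + (Z (S N) x - Z N x)) (Z (S N) x - Z O x)). ring.
Qed.

Lemma div_le_helper a b d e : 0 <= a <= b -> 0 < d <= e -> a / e <= b / d.
Proof.
  intros. apply Rle_trans with (b / e).
  - apply Rmult_le_compat_r. apply Rlt_le, Rinv_0_lt_compat; lra. lra.
  - apply Rmult_le_compat_l. lra. apply Rinv_le_contravar; lra.
Qed.

Lemma final_lim (Phi E : nat -> R -> R) (G : R -> R) (x K : R) :
  -3 < x < c_const ->
  (forall N, Phi N 0 = 0) ->
  (forall N y, -3 < y < 1 -> is_derive (Phi N) y (E N y)) ->
  (forall N y, Rmin 0 x <= y <= Rmax 0 x ->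
     E N y = G y * ((3 * INR N + 2) * (3 * INR N + 1) / bn N) * (y ^ (3 * N) / (y - 1) ^ N)) ->
  (forall y, Rmin 0 x <= y <= Rmax 0 x -> Rabs (G y) <= K) ->
  is_lim_seq (fun N => Phi N x) 0.
Proof.
  intros Hx H0 HD HE HG.
  assert (Hc1 : c_const < 1).
  { pose proof c_eq. destruct (Rlt_dec c_const 1); auto.
    assert (1 <= c_const ^ 3). { replace 1 with (1 ^ 3) by ring. apply pow_incr; lra. } lra. }
  assert (Hxx : -3 < x < 1) by lra.
  set (rho := Rabs x ^ 3 / (1 - x)).
  assert (Hrho : 0 <= rho < 27/4).
  { pose proof (rho_lt x (proj1 Hx) (proj2 Hx)). unfold rho. split.
    apply Rmult_le_pos. apply pow_le, Rabs_pos. apply Rlt_le, Rinv_0_lt_compat; lra.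
    apply (Rmult_lt_reg_r (4 * (1 - x))). lra.
    replace (Rabs x ^ 3 / (1 - x) * (4 * (1 - x))) with (4 * Rabs x ^ 3) by (field; lra). lra. }
  pose proof (decay rho Hrho) as Ld.
  set (a := fun N => (INR N + 1) ^ 2 * rho ^ N / bn N) in *.
  assert (HK : 0 <= K). { apply Rle_trans with (Rabs (G 0)). apply Rabs_pos. apply HG.
    unfold Rmin, Rmax; destruct (Rle_dec 0 x); lra. }
  assert (Hb : forall N, Rabs (Phi N x) <= (9 * K * Rabs x) * a N).
  { intros N. replace (Phi N x) with (Phi N x - Phi N 0) by (rewrite H0; ring).
    replace (9 * K * Rabs x * a N) with ((9 * K * a N) * Rabs x) by ring.
    apply mvt_bound with (df := E N).
    - intros y Hy. apply HD. unfold Rmin, Rmax in Hy; destruct (Rle_dec 0 x); lra.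
    - intros y Hy. rewrite (HE N y Hy). rewrite !Rabs_mult.
      pose proof (bn_pos N). pose proof (pos_INR N).
      unfold a.
      replace (9 * K * ((INR N + 1) ^ 2 * rho ^ N / bn N))
        with (K * (9 * (INR N + 1) ^ 2 / bn N) * rho ^ N) by (field; lra).
      apply Rmult_le_compat. 
      + apply Rmult_le_pos; apply Rabs_pos.
      + apply Rabs_pos.
      + apply Rmult_le_compat. apply Rabs_pos. apply Rabs_pos. apply HG; auto.
        rewrite Rabs_right.
        2: { apply Rle_ge, Rmult_le_pos. nra. apply Rlt_le, Rinv_0_lt_compat; lra. }
        apply Rmult_le_compat_r. apply Rlt_le, Rinv_0_lt_compat; lra. nra.
      + apply zbound; auto. }
  apply is_lim_seq_le_le with (u := fun N => - (9 * K * Rabs x) * a N) (w := fun N => (9 * K * Rabs x) * a N).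
  - intros N. pose proof (Hb N) as HH. pose proof (Rle_abs (Phi N x)). pose proof (Rle_abs (- Phi N x)). rewrite Rabs_Ropp in *. split; lra.
  - replace (Finite 0) with (Finite (- (9 * K * Rabs x) * 0)) by (f_equal; ring).
    apply is_lim_seq_mult'. apply is_lim_seq_const. auto.
  - replace (Finite 0) with (Finite ((9 * K * Rabs x) * 0)) by (f_equal; ring).
    apply is_lim_seq_mult'. apply is_lim_seq_const. auto.
Qed.

Definition Phi1 (N : nat) (x : R) := F0 x - sumg gf N x.

Lemma atan0' : atan 0 = 0.
Proof. apply atan_0. Qed.

Lemma Qf0 : Qf 0 = 0.
Proof.
  unfold Qf. rewrite <- (q_eq 0) by lra. unfold q_fun.
  destruct (Rlt_dec (-2) 0); [|lra].
  replace (0 / (0 + 2) * sqrt ((3 + 0) / (1 - 0))) with 0 by field. apply atan_0.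
Qed.

Lemma sumg0 (f : nat -> R -> R) N : (forall j, f j 0 = 0) -> sumg f N 0 = 0.
Proof. intros H. induction N; simpl; auto. rewrite IHN, H. ring. Qed.

Lemma Phi1_0 N : Phi1 N 0 = 0.
Proof.
  unfold Phi1, F0. rewrite Qf0. rewrite sumg0. field.
  intros j. unfold gf. rewrite pw_def. simpl. field. split. apply Rgt_not_eq, bn_pos.
  rewrite pw_def. apply pow_nonzero. lra.
Qed.

Lemma D_Phi1 N y : -3 < y < 1 -> is_derive (Phi1 N) y (- rr y * Yf N y).
Proof.
  intros Hy. unfold Phi1.
  pose proof (D_sum gf (fun j y => rr y * Yf j y) y) as DS.
  assert (DS' : forall N, is_derive (sumg gf N) y (rr y * Yf N y - rr y * Yf O y)).
  { apply DS. intros j. eapply is_derive_eq. apply D_g; auto. ring. }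
  eapply is_derive_eq. apply (is_derive_minus _ _ _ _ _ (D_F0 y Hy) (DS' N)).
  change (@eq R (- rr y * Yf 0 y - (rr y * Yf N y - rr y * Yf O y)) (- rr y * Yf N y)). ring.
Qed.

Lemma range_y x y : -3 < x < 1 -> Rmin 0 x <= y <= Rmax 0 x -> -3 < y < 1 /\ 1 - Rmax 0 x <= 1 - y /\ 0 < 1 - Rmax 0 x.
Proof. intros. unfold Rmin, Rmax in *. destruct (Rle_dec 0 x); lra. Qed.

Lemma lim1 x : -3 < x < c_const -> is_lim_seq (fun N => Phi1 N x) 0.
Proof.
  intros Hx.
  assert (Hc1 : c_const < 1).
  { pose proof c_eq. destruct (Rlt_dec c_const 1); auto.
    assert (1 <= c_const ^ 3). { replace 1 with (1 ^ 3) by ring. apply pow_incr; lra. } lra. }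
  set (dl := 1 - Rmax 0 x).
  apply final_lim with (E := fun N y => - rr y * Yf N y)
    (G := fun y => - rr y * (3 * (y + 3) * (2 * y - 3)) / (8 * (y - 1) ^ 2))
    (K := 2 * 3 * 4 * 9 / (8 * (dl * dl))); auto.
  - apply Phi1_0.
  - intros. apply D_Phi1; auto.
  - intros N y Hy. destruct (range_y x y ltac:(lra) Hy) as [Hy1 _].
    unfold Yf. pose proof (bn_pos N). assert ((y - 1) ^ N <> 0) by (apply pow_nonzero; lra).
    simpl pow. field. repeat split; lra.
  - intros y Hy. cbv beta. destruct (range_y x y ltac:(lra) Hy) as [Hy1 [Hd Hd0]]. fold dl in Hd, Hd0.
    pose proof (rr_pos y Hy1). pose proof (rr_sq y Hy1).
    assert (rr y * rr y <= 4). { rewrite (rr_sq y Hy1). pose proof (pow2_ge_0 (y + 1)). nra. }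
    assert (rr y <= 2) by nra.
    replace (- rr y * (3 * (y + 3) * (2 * y - 3)) / (8 * (y - 1) ^ 2))
      with (rr y * 3 * (y + 3) * (3 - 2 * y) / (8 * ((1 - y) * (1 - y)))) by (field; lra).
    rewrite Rabs_right.
    2: { apply Rle_ge, Rmult_le_pos. apply Rmult_le_pos. nra. lra. apply Rlt_le, Rinv_0_lt_compat. nra. }
    apply div_le_helper.
    + split. apply Rmult_le_pos. nra. lra.
      apply Rmult_le_compat; [nra | lra | | lra]. apply Rmult_le_compat; [nra | lra | lra | lra].
    + split. nra. apply Rmult_le_compat_l. lra. apply Rmult_le_compat; lra.
Qed.

Definition Phi2 (N : nat) (x : R) := F2 x - sumg g2 N x.

Lemma Phi2_0 N : Phi2 N 0 = 0.
Proof.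
  unfold Phi2, F2. rewrite sumg0. replace (1 - 0) with 1 by ring. rewrite ln_1. field.
  intros j. unfold g2. rewrite pw_def. simpl. field. split. apply Rgt_not_eq, bn_pos.
  rewrite pw_def. apply pow_nonzero. lra.
Qed.

Lemma D_Phi2 N y : -3 < y < 1 -> is_derive (Phi2 N) y (- Y2 N y).
Proof.
  intros Hy. unfold Phi2.
  assert (DS' : forall N, is_derive (sumg g2 N) y (Y2 N y - Y2 O y)).
  { apply (D_sum g2 Y2 y). intros j. apply D_g2; lra. }
  eapply is_derive_eq. apply (is_derive_minus _ _ _ _ _ (D_F2 y ltac:(lra)) (DS' N)).
  change (@eq R (- Y2 0 y - (Y2 N y - Y2 O y)) (- Y2 N y)). ring.
Qed.

Lemma lim2 x : -3 < x < c_const -> is_lim_seq (fun N => Phi2 N x) 0.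
Proof.
  intros Hx.
  assert (Hc1 : c_const < 1).
  { pose proof c_eq. destruct (Rlt_dec c_const 1); auto.
    assert (1 <= c_const ^ 3). { replace 1 with (1 ^ 3) by ring. apply pow_incr; lra. } lra. }
  set (dl := 1 - Rmax 0 x).
  apply final_lim with (E := fun N y => - Y2 N y)
    (G := fun y => - (3 * (2 * y - 3) * (y ^ 2 - 12 * y + 9)) / (12 * (1 - y) * (y - 1)))
    (K := 3 * 9 * 54 / (12 * (dl * dl))); auto.
  - apply Phi2_0.
  - intros. apply D_Phi2; auto.
  - intros N y Hy. destruct (range_y x y ltac:(lra) Hy) as [Hy1 _].
    unfold Y2. pose proof (bn_pos N). assert ((y - 1) ^ N <> 0) by (apply pow_nonzero; lra).
    simpl pow. field. repeat split; lra.
  - intros y Hy. cbv beta. destruct (range_y x y ltac:(lra) Hy) as [Hy1 [Hd Hd0]]. fold dl in Hd, Hd0.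
    replace (- (3 * (2 * y - 3) * (y ^ 2 - 12 * y + 9)) / (12 * (1 - y) * (y - 1)))
      with (- (3 * (3 - 2 * y) * (y ^ 2 - 12 * y + 9) / (12 * ((1 - y) * (1 - y))))) by (field; lra).
    rewrite Rabs_Ropp.
    assert (Hq : Rabs (y ^ 2 - 12 * y + 9) <= 54).
    { apply Rabs_le. split; nra. }
    rewrite Rabs_div by (apply Rgt_not_eq; nra).
    rewrite Rabs_mult. rewrite (Rabs_right (3 * (3 - 2 * y))) by lra.
    rewrite (Rabs_right (12 * ((1 - y) * (1 - y)))) by nra.
    apply div_le_helper.
    + split. apply Rmult_le_pos. lra. apply Rabs_pos.
      apply Rmult_le_compat; [lra | apply Rabs_pos | lra | auto].
    + split. nra. apply Rmult_le_compat_l. lra. apply Rmult_le_compat; lra.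
Qed.


Lemma c_lt1 : c_const < 1.
Proof.
  pose proof c_eq. destruct (Rlt_dec c_const 1); auto.
  assert (1 <= c_const ^ 3). { replace 1 with (1 ^ 3) by ring. apply pow_incr; lra. } lra.
Qed.

Lemma part1 (x : R) (hx1 : -3 < x) (hx2 : x < c_const) :
  is_series
    (fun n : nat => let k := S n in
       (((2 * x - 3) ^ 2 * INR k + 2 * x ^ 2 + 2 * x - 3) * x ^ (3 * k))
       / ((x - 1) ^ k * binom (3 * k) k))
    (- 2 * x ^ 3 * (x + 7) / (x + 3) ^ 2
     + 8 * x ^ 2 * (x - 1) * q_fun x / ((x + 3) ^ 2 * sqrt ((1 - x) * (3 + x)))).
Proof.
  pose proof c_lt1. assert (Hx : -3 < x < 1) by lra.
  set (a1 := fun n : nat => let k := S n in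
       (((2 * x - 3) ^ 2 * INR k + 2 * x ^ 2 + 2 * x - 3) * x ^ (3 * k))
       / ((x - 1) ^ k * binom (3 * k) k)).
  set (B1 := 8 * x ^ 2 * (x - 1) / ((x + 3) ^ 2 * rr x)).
  pose proof (rr_pos x Hx).
  assert (Ha : forall n, a1 n = B1 * gf n x).
  { intros n. unfold a1, B1, gf, Kp. cbv zeta.
    replace (binom (3 * S n) (S n)) with (bn n) by (unfold bn; f_equal; lia).
    rewrite pow_S3, !pw_def, S_INR. pose proof (bn_pos n).
    assert ((x - 1) ^ n <> 0) by (apply pow_nonzero; lra).
    simpl pow. field. repeat split; lra. }
  assert (HH : - 2 * x ^ 3 * (x + 7) / (x + 3) ^ 2
     + 8 * x ^ 2 * (x - 1) * q_fun x / ((x + 3) ^ 2 * sqrt ((1 - x) * (3 + x))) = B1 * F0 x).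
  { rewrite (q_eq x Hx). fold (rr x). unfold B1, F0, Qf. field. repeat split; lra. }
  assert (Hs : forall N, sum_n a1 N = B1 * sumg gf (S N) x).
  { induction N.
    - rewrite sum_O. rewrite Ha. simpl. ring.
    - rewrite sum_Sn, IHN, Ha. change (plus (B1 * sumg gf (S N) x) (B1 * gf (S N) x)) with
        (B1 * sumg gf (S N) x + B1 * gf (S N) x). simpl. ring. }
  rewrite HH.
  assert (L : is_lim_seq (sum_n a1) (B1 * F0 x)). 2: exact L.
  apply (is_lim_seq_ext (fun N => B1 * F0 x - B1 * Phi1 (S N) x)).
  - intros N. rewrite Hs. unfold Phi1. ring.
  - replace (Finite (B1 * F0 x)) with (Finite (B1 * F0 x - B1 * 0)) by (f_equal; ring).
    apply is_lim_seq_minus'. apply is_lim_seq_const. apply is_lim_seq_mult'. apply is_lim_seq_const.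
    apply (is_lim_seq_incr_1 (fun N => Phi1 N x)). apply lim1. lra.
Qed.

Lemma part2 (x : R) (hx1 : -3 < x) (hx2 : x < c_const) :
  is_series
    (fun k : nat =>
       ((s_fun x * INR k + t_fun x) * x ^ (3 * k))
       / ((x - 1) ^ k * binom (3 * k) k))
    (12 * x ^ 2 * (1 - x) * ln (1 - x) - 27 * (1 - x) * (x ^ 2 - 6 * x + 3)).
Proof.
  pose proof c_lt1. assert (Hx : -3 < x < 1) by lra.
  set (a2 := fun k : nat =>
       ((s_fun x * INR k + t_fun x) * x ^ (3 * k))
       / ((x - 1) ^ k * binom (3 * k) k)).
  set (B2 := 12 * x ^ 2 * (1 - x)).
  assert (Ha : forall n, a2 (S n) = B2 * g2 n x).
  { intros n. unfold a2, B2, g2.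
    replace (binom (3 * S n) (S n)) with (bn n) by (unfold bn; f_equal; lia).
    rewrite pow_S3, !pw_def, S_INR. pose proof (bn_pos n).
    assert ((x - 1) ^ n <> 0) by (apply pow_nonzero; lra).
    simpl pow. field. repeat split; lra. }
  assert (Ha0 : a2 O = t_fun x).
  { unfold a2. simpl. rewrite binom00. field. }
  assert (HH : B2 * ln (1 - x) - 27 * (1 - x) * (x ^ 2 - 6 * x + 3)
     = t_fun x + B2 * F2 x).
  { unfold B2, F2, t_fun. field. lra. }
  assert (Hs : forall N, sum_n a2 N = t_fun x + B2 * sumg g2 N x).
  { induction N.
    - rewrite sum_O. rewrite Ha0. simpl. ring.
    - rewrite sum_Sn, IHN, Ha. change (plus (t_fun x + B2 * sumg g2 N x) (B2 * g2 N x)) with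
        (t_fun x + B2 * sumg g2 N x + B2 * g2 N x). simpl. ring. }
  rewrite HH.
  assert (L : is_lim_seq (sum_n a2) (t_fun x + B2 * F2 x)). 2: exact L.
  apply (is_lim_seq_ext (fun N => t_fun x + B2 * F2 x - B2 * Phi2 N x)).
  - intros N. rewrite Hs. unfold Phi2. ring.
  - replace (Finite (t_fun x + B2 * F2 x)) with (Finite (t_fun x + B2 * F2 x - B2 * 0)) by (f_equal; ring).
    apply is_lim_seq_minus'. apply is_lim_seq_const. apply is_lim_seq_mult'. apply is_lim_seq_const.
    apply lim2. lra.
Qed.


Theorem theorem1p1 (x : R) (hx1 : -3 < x) (hx2 : x < c_const) :
  is_series
    (fun n : nat => let k := S n in
       (((2 * x - 3) ^ 2 * INR k + 2 * x ^ 2 + 2 * x - 3) * x ^ (3 * k))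
       / ((x - 1) ^ k * binom (3 * k) k))
    (- 2 * x ^ 3 * (x + 7) / (x + 3) ^ 2
     + 8 * x ^ 2 * (x - 1) * q_fun x / ((x + 3) ^ 2 * sqrt ((1 - x) * (3 + x))))
  /\
  is_series
    (fun k : nat =>
       ((s_fun x * INR k + t_fun x) * x ^ (3 * k))
       / ((x - 1) ^ k * binom (3 * k) k))
    (12 * x ^ 2 * (1 - x) * ln (1 - x) - 27 * (1 - x) * (x ^ 2 - 6 * x + 3)).
Proof.
  split; [apply part1 | apply part2]; auto.
Qed.
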